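(* Let $G=(V,E)$ be a directed graph with an extraction order $G^{\mathcal X}=(V,E^{\mathcal X},s)$. Suppose a node $v\in V$ separates a set of nodes $U\subset V$ from the root $s$, i.e., every path in the underlying undirected graph of $G$ from $s$ to a node of $U$ passes through $v$. Then every edge incident to $v$ and to some node $u\in U$ is oriented away from $v$ in the extraction order, i.e., it appears as $(v,u)\in E^{\mathcal X}$.
   Context: An extraction order of a directed graph $G=(V,E)$ is a rooted directed graph $G^{\mathcal X}=(V,E^{\mathcal X},s)$ with root $s\in V$ such that $G^{\mathcal X}$ is acyclic, every node is reachable from $s$, and $E^{\mathcal X}$ is obtained from $E$ by reversing the orientation of some (possibly no) edges. *)

(* Defs.v *)
From mathcomp Require Import all_boot.
Set Implicit Arguments. Unset Strict Implicit. Unset Printing Implicit Defensive.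

Definition reorient (V : finType) (E flip : rel V) : rel V :=
  fun x y => (E x y && ~~ flip x y) || (E y x && flip y x).

(* Acyclic directed graph: no edge (x,y) with y reaching x (includes no self-loops). *)
Definition acyclic_rel (V : finType) (R : rel V) : Prop :=
  forall x y, R x y -> ~~ connect R y x.

Definition extraction_order (V : finType) (E EX : rel V) (s : V) : Prop :=
  [/\ exists flip : rel V, EX =2 reorient E flip,
      acyclic_rel EX
    & forall x, connect EX s x].

Definition undirected (V : finType) (E : rel V) : rel V :=
  fun x y => E x y || E y x.

Definition separates (V : finType) (E : rel V) (v s : V) (U : {set V}) : Prop :=
  forall (p : seq V), path (undirected E) s p -> last s p \in U -> v \in s :: p.

(* Main.v *)
Require Import Defs.
From mathcomp Require Import all_boot.

Theorem lemma39 (V : finType) (E EX : rel V) (s v : V) (U : {set V}) :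
  extraction_order E EX s ->
  separates E v s U ->
  forall u, u \in U -> (E v u || E u v) -> EX v u.
Proof.
move=> [[flip Hf] Hac Hreach] Hsep u Hu Hvu.
have Hund : forall x y, EX x y -> undirected E x y.
  move=> x y; rewrite Hf /reorient /undirected.
  by case/orP=> /andP[-> _] //; rewrite orbT.
have Hor : EX v u || EX u v.
  rewrite !Hf /reorient.
  case/orP: Hvu => H; rewrite H /=;
  by case: (flip v u); case: (flip u v); rewrite ?orbT ?andbT ?andbF ?orbF ?H.
case/orP: Hor => // Huv; exfalso.
have /connectP[p Hp Hl] := Hreach u.
have Hp' : path (undirected E) s p by apply: sub_path Hp.
have := Hsep p Hp'; rewrite -Hl => /(_ Hu) Hv.
case/splitPl: Hv Hp Hl => p1 p2 Hv.
rewrite cat_path last_cat Hv => /andP[_ Hp2] Hl.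
have : connect EX v u by apply/connectP; exists p2.
by move/negP: (Hac _ _ Huv).
Qed.
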